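(* Assume $\kappa=(\kappa_1,\dots,\kappa_n)\in\Gamma_k$ with $\kappa_1\ge\kappa_2\ge\dots\ge\kappa_n$. Then for any $0\le s\le k\le n$, $$\frac{\kappa_1^s\,\sigma_{k-s}(\kappa)}{\sigma_k(\kappa)}\ge\frac{C_n^{k-s}}{C_n^k},$$ where $C_n^m=\frac{n!}{m!(n-m)!}$.
   Context: $\sigma_m(\kappa)$ denotes the $m$-th elementary symmetric function of $\kappa\in\mathbb{R}^n$, with $\sigma_0=1$. $\Gamma_k=\{\kappa\in\mathbb{R}^n:\sigma_m(\kappa)>0,\ m=1,\dots,k\}$ (Gårding cone), $k\ge1$. *)

(* Defs.v *)
From mathcomp Require Import all_boot all_order all_algebra.
Set Implicit Arguments. Unset Strict Implicit. Unset Printing Implicit Defensive.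
Import Order.TTheory GRing.Theory Num.Theory.
Local Open Scope ring_scope.

Definition esymf (R : comPzRingType) (n m : nat) (kappa : 'I_n -> R) : R :=
  \sum_(A : {set 'I_n} | #|A| == m) \prod_(i in A) kappa i.

Definition garding (R : realFieldType) (n k : nat) (kappa : 'I_n -> R) : Prop :=
  forall m : nat, (1 <= m)%N -> (m <= k)%N -> 0 < esymf m kappa.

(* Main.v *)
Require Import Defs.
From mathcomp Require Import all_boot all_order all_algebra.
From mathcomp Require Import ring lra zify.
Set Implicit Arguments. Unset Strict Implicit. Unset Printing Implicit Defensive.
Import Order.TTheory GRing.Theory Num.Theory.
Local Open Scope ring_scope.



Definition E {R : realFieldType} (l : seq R) (m : nat) : R :=
  (\prod_(x <- l) (x *: 'X + 1))`_m.

Lemma E_nil {R : realFieldType} m : E (R:=R) [::] m = (m == 0%N)%:R.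
Proof. by rewrite /E big_nil coef1. Qed.

Lemma E_cons0 {R : realFieldType} (x : R) l : E (x :: l) 0 = E l 0.
Proof.
by rewrite /E big_cons mulrDl mul1r coefD -scalerAl coefZ coefXM /= mulr0 add0r.
Qed.

Lemma E_consS {R : realFieldType} (x : R) l m : E (x :: l) m.+1 = E l m.+1 + x * E l m.
Proof.
by rewrite /E big_cons mulrDl mul1r coefD -scalerAl coefZ coefXM /= addrC.
Qed.

Lemma E0 {R : realFieldType} (l : seq R) : E l 0 = 1.
Proof. by elim: l => [|x l IH]; rewrite ?E_nil ?E_cons0. Qed.

Lemma E_perm {R : realFieldType} (l1 l2 : seq R) m : perm_eq l1 l2 -> E l1 m = E l2 m.
Proof. by move=> p; rewrite /E (perm_big _ p). Qed.

Lemma E_big {R : realFieldType} (l : seq R) m : (size l < m)%N -> E l m = 0.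
Proof.
elim: l m => [|x l IH] [|m] //=; first by rewrite E_nil.
by rewrite ltnS => h; rewrite E_consS !IH ?mulr0 ?addr0 // ltnW.
Qed.

Lemma esymf_E {R : realFieldType} n m (k : 'I_n -> R) :
  esymf m k = E (map k (enum 'I_n)) m.
Proof.
rewrite /E big_map big_enum /= bigA_distr coef_sum /esymf.
have h : forall A : {set 'I_n}, (\prod_(i < n) (if i \in A then k i *: 'X else 1))`_m
   = if #|A| == m then \prod_(i in A) k i else 0.
  move=> A; rewrite -big_mkcond /=.
  have -> : \prod_(i in A) (k i *: 'X) = (\prod_(i in A) k i) *: 'X^#|A|.
    by rewrite scaler_prod prodr_const.
  by rewrite coefZ coefXn eq_sym; case: eqP; rewrite ?mulr1 ?mulr0.
under [RHS]eq_bigr => A _ do rewrite h.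
by rewrite -big_mkcond.
Qed.

Definition Gam {R : realFieldType} k (l : seq R) := forall m, (1 <= m <= k)%N -> 0 < E l m.

Lemma E1 {R : realFieldType} (x : R) l : E (x :: l) 1 = E l 1 + x.
Proof. by rewrite E_consS E0 mulr1. Qed.

Lemma E_le1 {R : realFieldType} (l : seq R) a : (forall x, x \in l -> x <= a) ->
  E l 1 <= (size l)%:R * a.
Proof.
elim: l => [|x l IH] h; first by rewrite E_nil mul0r.
rewrite E1 /= -[(size l).+1]addn1 natrD mulrDl mul1r lerD //.
  by apply: IH => y hy; apply: h; rewrite inE hy orbT.
by apply: h; rewrite inE eqxx.
Qed.

Lemma exists_pos {R : realFieldType} (l : seq R) : 0 < E l 1 -> exists2 z, z \in l & 0 < z.
Proof.
elim: l => [|x l IH]; first by rewrite E_nil ltxx.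
rewrite E1 => h; case: (ltrP 0 x) => hx; first by exists x; rewrite ?inE ?eqxx.
have : 0 < E l 1 by apply: (lt_le_trans h); rewrite gerDl.
by case/IH => z hz hz0; exists z; rewrite // inE hz orbT.
Qed.

Lemma pos_E {R : realFieldType} (l : seq R) m : (forall x, x \in l -> 0 < x) ->
  (m <= size l)%N -> 0 < E l m.
Proof.
elim: l m => [|x l IH] [|m] h //= hm; rewrite ?E0 //.
have hl : forall y, y \in l -> 0 < y by move=> y hy; apply: h; rewrite inE hy orbT.
have hx : 0 < x by apply: h; rewrite inE eqxx.
rewrite E_consS; case: (leqP m.+1 (size l)) => hs.
  by apply: ltr_pwDl; [apply: IH | apply: mulr_ge0; [apply: ltW | apply: ltW; apply: IH; rewrite // ltnW]].
rewrite E_big // add0r mulr_gt0 //; apply: IH => //.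
Qed.

Lemma nonneg_E {R : realFieldType} (l : seq R) m : (forall x, x \in l -> 0 <= x) -> 0 <= E l m.
Proof.
elim: l m => [|x l IH] [|m] h; rewrite ?E0 ?E_nil //.
have hl : forall y, y \in l -> 0 <= y by move=> y hy; apply: h; rewrite inE hy orbT.
have hx : 0 <= x by apply: h; rewrite inE eqxx.
by rewrite E_consS addr_ge0 ?mulr_ge0 ?IH.
Qed.

Lemma nonpos_remove {R : realFieldType} (x : R) l k : x <= 0 -> Gam k (x :: l) -> Gam k l.
Proof.
move=> hx hG.
suff H : forall m, (m <= k)%N -> 0 < E l m by move=> m /andP[_ hm]; apply: H.
elim=> [|m IH] hm; first by rewrite E0.
have h1 := hG m.+1 hm.
have h2 := IH (ltnW hm).
rewrite E_consS in h1.
nra.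
Qed.

Lemma Gam_size {R : realFieldType} k (l : seq R) : Gam k l -> (k <= size l)%N.
Proof.
case: k => // k h; rewrite leqNgt; apply/negP => hs.
by have := h k.+1 (leqnn _); rewrite E_big // ltxx.
Qed.

Lemma Gam_le {R : realFieldType} k k' (l : seq R) : (k' <= k)%N -> Gam k l -> Gam k' l.
Proof. by move=> hk h m /andP[h1 h2]; apply: h; rewrite h1 (leq_trans h2). Qed.

Lemma Gam_perm {R : realFieldType} k (l1 l2 : seq R) : perm_eq l1 l2 -> Gam k l1 -> Gam k l2.
Proof. by move=> p h m hm; rewrite -(E_perm _ p); apply: h. Qed.

Lemma Epos0 {R : realFieldType} k (l : seq R) m : Gam k l -> (m <= k)%N -> 0 < E l m.
Proof. by case: m => [|m] h hm; rewrite ?E0 // h. Qed.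



Lemma LNW {R : realFieldType} n :
 (forall (z : R) mu k, (size mu < n)%N -> Gam k (z :: mu) -> Gam k.-1 mu) /\
 (forall (l : seq R) m, (size l <= n)%N -> Gam m l -> (1 <= m)%N ->
    E l m.-1 * E l m.+1 <= E l m ^+ 2).
Proof.
elim: n => [|n [IHL IHN]].
  split => // l m; rewrite leqn0 => /nilP -> h hm.
  by have := h 1%N; rewrite hm E_nil ltxx => /(_ isT).
have L' : forall (z : R) mu k, (size mu < n.+1)%N -> Gam k (z :: mu) -> Gam k.-1 mu.
  move=> z mu k hs hG t /andP[t1 tk].
  case: (lerP z 0) => hz.
    by apply: (nonpos_remove hz hG); rewrite t1 (leq_trans tk) // leq_pred.
  case: (boolP (all (fun x => 0 < x) mu)) => [/allP hall|].
    apply: pos_E => //; have := Gam_size hG; rewrite /= => hk.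
    by rewrite (leq_trans tk) // -ltnS prednK // (leq_trans t1) // (leq_trans tk) // leq_pred.
  case/allPn => x hx; rewrite -leNgt => hx0.
  set nu := rem x mu.
  have pmu : perm_eq mu (x :: nu) by apply: perm_to_rem.
  have p1 : perm_eq (z :: mu) (z :: x :: nu) by rewrite perm_cons.
  have p2 : perm_eq (z :: mu) (x :: z :: nu).
    apply: (perm_trans p1); by move: (perm_catCA [:: z] [:: x] nu (x :: z :: nu)); rewrite /= perm_refl.
  have hG2 : Gam k (z :: nu) by apply: (nonpos_remove hx0); apply: Gam_perm p2 hG.
  have hsnu : (size nu < n)%N.
    by move: hs; rewrite (perm_size pmu) /=.
  have hGnu := IHL z nu k hsnu hG2.
  rewrite (E_perm _ pmu).
  case: t t1 tk => // t _ tk.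
  have hk : (t.+2 <= k)%N by move: tk; case: (k).
  have hN := IHN nu t.+1 (ltnW hsnu) (Gam_le tk hGnu) isT.
  rewrite /= in hN.
  have a1 : 0 < E nu t.+1 by apply: hGnu; rewrite tk.
  have a0 : 0 < E nu t by apply: (Epos0 hGnu); rewrite ltnW.
  have hz2 := hG t.+2 hk.
  rewrite (E_perm _ p1) !E_consS in hz2.
  rewrite E_consS.
  rewrite ltNge; apply/negP => hneg.
  have h3 : 0 < E nu t.+2 + x * E nu t.+1 by nra.
  nra.
split => // l m hs hG hm.
case: (lerP (E l m.+1) 0) => h1.
  have : 0 < E l m.-1 by apply: (Epos0 hG); rewrite leq_pred.
  move=> h0; apply: (le_trans (y := 0)); first by rewrite pmulr_rle0.
  by rewrite sqr_ge0.
have hG1 : Gam m.+1 l by move=> t /andP[t1]; rewrite leq_eqVlt => /orP[/eqP -> //|]; rewrite ltnS => tm; apply: hG; rewrite t1.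
have [z hz hz0] := exists_pos (hG 1%N (andb_true_intro (conj isT hm))).
set mu := rem z l.
have pl : perm_eq l (z :: mu) by apply: perm_to_rem.
have hsmu : (size mu < n.+1)%N by move: hs; rewrite (perm_size pl).
have hGmu := L' z mu m.+1 hsmu (Gam_perm pl hG1).
rewrite /= in hGmu.
have hNmu := IHN mu _ hsmu.
rewrite !(E_perm _ pl).
case: m hm hG hG1 hGmu h1 {hNmu} => // [[|p]] _ hG hG1 hGmu h1.
  rewrite /= !E_consS !E_cons0 !E0.
  have c1 : 0 < E mu 1 by apply: hGmu.
  have := IHN mu 1%N hsmu hGmu isT; rewrite /= E0 mul1r => hn.
  nra.
rewrite /= !E_consS.
have c1 : 0 < E mu p.+1 by apply: (Epos0 hGmu); rewrite ltnW.
have c2 : 0 < E mu p.+2 by apply: (Epos0 hGmu).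
have c0 : 0 < E mu p by apply: (Epos0 hGmu); rewrite ltnW // ltnW.
have n2 := IHN mu p.+2 hsmu hGmu isT.
have n1 := IHN mu p.+1 hsmu (Gam_le (leqnSn _) hGmu) isT.
rewrite /= in n1 n2.
have n3 : E mu p * E mu p.+3 <= E mu p.+1 * E mu p.+2.
  case: (lerP (E mu p.+3) 0) => h3; first by nra.
  have : E mu p * E mu p.+2 * E mu p.+3 <= E mu p.+1 * E mu p.+2 * E mu p.+2 by nra.
  nra.
nra.
Qed.



Lemma Dpos {R : realFieldType} (l : seq R) a : (forall x, x \in l -> 0 <= x <= a) ->
  forall j, (1 <= j)%N -> j%:R * E l j <= (size l + 1 - j)%:R * a * E l j.-1.
Proof.
elim: l => [|x l IH] h j hj.
  by rewrite E_nil; case: j hj => // j _; rewrite mulr0 subSS sub0n mul0r mul0r.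
have hl : forall y, y \in l -> 0 <= y <= a by move=> y hy; apply: h; rewrite inE hy orbT.
have /andP[hx0 hxa] : 0 <= x <= a by apply: h; rewrite inE eqxx.
have hnn : forall y, y \in l -> 0 <= y by move=> y /hl /andP[].
have ha : 0 <= a by apply: le_trans hxa.
case: j hj => // [[|t]] _.
  by rewrite mul1r E0 mulr1 addn1 subn1 /=; apply: E_le1 => y /h /andP[].
rewrite /= !E_consS.
case: (leqP t.+2 (size l + 1)) => hs.
  have [N hN] : exists N, (size l + 1 = N + t.+2)%N by exists (size l + 1 - t.+2)%N; rewrite subnK.
  have -> : ((size l).+1 + 1 - t.+2 = N + 1)%N by lia.
  have IH1 := IH hl t.+2 isT.
  have IH2 := IH hl t.+1 isT.
  rewrite hN /= in IH1 IH2.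
  rewrite (_ : (N + t.+2 - t.+2 = N)%N) in IH1; last by lia.
  rewrite (_ : (N + t.+2 - t.+1 = N + 1)%N) in IH2; last by lia.
  have e1 : 0 <= E l t.+1 by apply: nonneg_E.
  rewrite !natrD in IH1 IH2 *.
  nra.
rewrite E_big /=; last by lia.
rewrite [E l t.+1]E_big; last by lia.
rewrite mulr0 add0r mulr0.
have -> : ((size l).+1 + 1 - t.+2 = 0)%N by lia.
by rewrite !mul0r.
Qed.



Lemma DG {R : realFieldType} n : forall (l : seq R), (size l <= n)%N ->
  forall k a, (forall x, x \in l -> x <= a) -> 0 < a -> Gam k l ->
  forall j, (1 <= j <= k)%N -> j%:R * E l j <= (size l + 1 - j)%:R * a * E l j.-1.
Proof.
elim: n => [|n IH] l hs k a hla ha hG j /andP[j1 jk].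
  by have := Gam_size hG; move: hs; rewrite leqn0 => /eqP -> ; lia.
case: (boolP (all (fun x => 0 <= x) l)) => [/allP hall|].
  by apply: Dpos => // x hx; rewrite hall ?hla.
case/allPn => x hx; rewrite -ltNge => hx0.
set lam := rem x l.
have pl : perm_eq l (x :: lam) by apply: perm_to_rem.
have hGl : Gam k (x :: lam) := Gam_perm pl hG.
have hGlam : Gam k lam := nonpos_remove (ltW hx0) hGl.
have hslam : (size lam <= n)%N by move: hs; rewrite (perm_size pl).
have hlam : forall y, y \in lam -> y <= a.
  by move=> y hy; apply: hla; rewrite (perm_mem pl) inE hy orbT.
rewrite !(E_perm _ pl) (perm_size pl) /=.
case: j j1 jk => // [[|t]] _ jk.
  by rewrite mul1r E0 mulr1 addn1 subn1 /=; apply: E_le1 => y; rewrite -(perm_mem pl); apply: hla.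
have hks := Gam_size hGlam.
have [N hN] : exists N, (size lam = N + t.+2)%N.
  by exists (size lam - t.+2)%N; rewrite subnK // (leq_trans jk).
have IH1 := IH lam hslam k a hlam ha hGlam t.+2 jk.
rewrite hN /= in IH1.
rewrite (_ : (N + t.+2 + 1 - t.+2 = N + 1)%N) in IH1; last by lia.
rewrite hN (_ : ((N + t.+2).+1 + 1 - t.+2 = N + 2)%N); last by lia.
have hNW := (LNW (size lam)).2 lam t.+1 (leqnn _) (Gam_le (ltnW jk) hGlam) isT.
rewrite /= in hNW.
have e1 : 0 < E lam t.+1 by apply: hGlam; rewrite (ltnW jk).
have e0 : 0 < E lam t by apply: (Epos0 hGlam); rewrite ltnW // ltnW.
have hk2 := hGl t.+2 (andb_true_intro (conj isT jk)).
rewrite E_consS in hk2.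
rewrite !E_consS.
set e2 := E lam t.+2 in IH1 hNW hk2 *.
set f1 := E lam t.+1 in IH1 hNW hk2 e1 *.
set f0 := E lam t in hNW e0 *.
rewrite !natrD in IH1 *.
set T := t.+2%:R in IH1 *.
set M := N%:R in IH1 *.
have hT : 0 <= T by rewrite ler0n.
have hM : 0 <= M by rewrite ler0n.
set y := - x.
have hy : 0 <= y by rewrite /y oppr_ge0 ltW.
have hxy : x = - y by rewrite /y opprK.
rewrite hxy in hk2 *.
set F := (M + 2) * a * (f1 + - y * f0) - T * (e2 + - y * f1).
set F0 := (M + 2) * a * f1 - T * e2.
have key : e2 * F = (e2 - y * f1) * F0 + y * ((M + 2) * a * (f1 ^+ 2 - f0 * e2)).
  rewrite /F /F0; ring.
have hF0 : 0 <= F0 by rewrite /F0; nra.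
have he2 : 0 < e2 by nra.
have hR : 0 <= e2 * F.
  rewrite key addr_ge0 // ?mulr_ge0 //; try nra.
have hF : 0 <= F by rewrite -(pmulr_rge0 _ he2).
rewrite /F in hF; lra.
Qed.



Lemma chain {R : realFieldType} (l : seq R) k a : (forall x, x \in l -> x <= a) -> 0 < a ->
  Gam k l -> forall s, (s <= k)%N ->
  ('C(size l, k - s))%:R * E l k <= ('C(size l, k))%:R * a ^+ s * E l (k - s).
Proof.
move=> hla ha hG; set n := size l.
have hkn : (k <= n)%N := Gam_size hG.
elim=> [|s IH] hs.
  by rewrite subn0 expr0 mulr1.
have IH1 := IH (ltnW hs).
set j := (k - s)%N in IH1.
have hj1 : (1 <= j <= k)%N by rewrite /j; apply/andP; split; lia.
have hD := DG (leqnn _) hla ha hG hj1.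
rewrite -/n in hD.
have -> : (k - s.+1 = j.-1)%N by rewrite /j; lia.
have hbin : ('C(n, j.-1) * (n + 1 - j) = j * 'C(n, j))%N.
  have := mul_bin_left n j.-1.
  rewrite prednK; last by case/andP: hj1.
  by move=> ->; rewrite mulnC (_ : (n + 1 - j = n - j.-1)%N) //; lia.
have hbinR : ('C(n, j.-1))%:R * (n + 1 - j)%:R = j%:R * ('C(n, j))%:R :> R.
  by rewrite -!natrM hbin.
have hpos : 0 < (n + 1 - j)%:R :> R by rewrite ltr0n; case/andP: hj1 => ? ?; lia.
have ek : 0 < E l k by apply: hG; case/andP: hj1 => h1 h2; rewrite (leq_trans h1 h2) leqnn.
have ej1 : 0 <= E l j.-1 by apply: ltW; apply: (Epos0 hG); rewrite (leq_trans (leq_pred _)) //; case/andP: hj1.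
set B1 := ('C(n, j.-1))%:R in hbinR *.
set B2 := ('C(n, j))%:R in hbinR IH1.
set B := ('C(n, k))%:R in IH1 *.
set J := j%:R in hbinR hD.
set M := (n + 1 - j)%:R in hbinR hD hpos.
have hB : 0 <= B by rewrite ler0n.
have hJ : 0 <= J by rewrite ler0n.
have has : 0 <= a ^+ s by rewrite exprn_ge0 // ltW.
rewrite exprSr.
set A := a ^+ s in IH1 has *.
set ej := E l j in IH1 hD.
set ek' := E l k in IH1 ek *.
set ej' := E l j.-1 in hD ej1 *.
have h1 : M * (B1 * ek') <= M * (B * (A * a) * ej').
  have e1 : M * (B1 * ek') = J * (B2 * ek') by rewrite mulrA (mulrC M) hbinR; ring.
  rewrite e1.
  have h2 : J * (B2 * ek') <= J * (B * A * ej) by apply: ler_wpM2l.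
  apply: (le_trans h2).
  have h3 : J * ej <= M * a * ej' := hD.
  have h4 : 0 <= B * A by apply: mulr_ge0.
  have := ler_wpM2l h4 h3.
  move=> h5.
  have e3 : J * (B * A * ej) = B * A * (J * ej) by ring.
  have e4 : M * (B * (A * a) * ej') = B * A * (M * a * ej') by ring.
  by rewrite e3 e4.
by rewrite -(ler_pM2l hpos).
Qed.



Theorem lemma2p3 (R : realFieldType) (n k s : nat) (kappa : 'I_n -> R) (i1 : 'I_n) :
  nat_of_ord i1 = 0%N ->
  (1 <= k)%N -> garding k kappa ->
  (forall i j : 'I_n, (i <= j)%N -> kappa j <= kappa i) ->
  (s <= k)%N -> (k <= n)%N ->
  (binomial n (k - s))%:R / (binomial n k)%:R
    <= kappa i1 ^+ s * esymf (k - s)%N kappa / esymf k kappa.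
Proof.
move=> hi1 hk hg hmon hs hkn.
set l := map kappa (enum 'I_n).
have hsz : size l = n by rewrite size_map size_enum_ord.
have hG : Gam k l by move=> m /andP[m1 mk]; rewrite -esymf_E; apply: hg.
have hla : forall x, x \in l -> x <= kappa i1.
  by move=> x /mapP[i _ ->]; apply: hmon; rewrite hi1.
have ha : 0 < kappa i1.
  have [z hz hz0] := exists_pos (hG 1%N (andb_true_intro (conj isT hk))).
  by apply: lt_le_trans hz0 (hla z hz).
have hc := chain hla ha hG hs.
rewrite hsz in hc.
rewrite !esymf_E -/l.
have ek : 0 < E l k by apply: hG; rewrite hk leqnn.
have hb : 0 < ('C(n, k))%:R :> R by rewrite ltr0n bin_gt0.
rewrite ler_pdivrMr // mulrAC ler_pdivlMr //.
by apply: (le_trans hc); rewrite le_eqVlt; apply/orP; left; apply/eqP; ring.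
Qed.
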